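(* For every $F\in\mathbb{N}^5\setminus\{0\}$, $$\sqrt{2}^{\,\|F-1\|}\le N(F).$$
   Context: $\mathbb{N}=\{0,1,2,\dots\}$. A GNS is a submonoid $S\subseteq\mathbb{N}^d$ with finite complement $\mathcal{H}(S)=\mathbb{N}^d\setminus S$. A Frobenius GNS with Frobenius gap $F$ is a GNS such that $F$ is the unique maximal element of $\mathcal{H}(S)$ for the natural partial order. $N(F)$ is the number of Frobenius GNS $S\subseteq\mathbb{N}^d$ (here $d=5$) with Frobenius gap $F$. $\|F-1\|=\prod_{i=1}^5F^{(i)}$. *)

(* Defs.v *)
From HB Require Import structures.
From mathcomp Require Import all_boot all_order all_algebra.
From mathcomp Require Import boolp classical_sets cardinality.
Set Implicit Arguments. Unset Strict Implicit. Unset Printing Implicit Defensive.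
Import Order.TTheory GRing.Theory Num.Theory.
Local Open Scope classical_set_scope.
Local Open Scope card_scope.

Definition pt (d : nat) := 'I_d -> nat.
Definition pzero {d} : pt d := fun _ => 0%N.
Definition padd {d} (x y : pt d) : pt d := fun i => (x i + y i)%N.
Definition ple {d} (x y : pt d) : Prop := forall i, (x i <= y i)%N.

Definition is_submonoid {d} (S : set (pt d)) : Prop :=
  S pzero /\ (forall x y, S x -> S y -> S (padd x y)).

Definition holes {d} (S : set (pt d)) : set (pt d) := ~` S.

Definition GNS {d} (S : set (pt d)) : Prop :=
  is_submonoid S /\ finite_set (holes S).

Definition is_maximal {d} (A : set (pt d)) (x : pt d) : Prop :=
  A x /\ (forall y, A y -> ple x y -> y = x).

Definition FrobeniusGNS {d} (F : pt d) (S : set (pt d)) : Prop :=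
  GNS S /\ is_maximal (holes S) F /\
  (forall h, is_maximal (holes S) h -> h = F).

Definition N_is {d} (F : pt d) (n : nat) : Prop :=
  [set S : set (pt d) | FrobeniusGNS F S] #= `I_n.

(* Main.v *)
Require Import Defs.
From mathcomp Require Import all_boot all_order all_algebra.
From mathcomp Require Import boolp classical_sets cardinality.
From mathcomp Require Import finmap zify.
Import Order.TTheory GRing.Theory Num.Theory.

Module Helpers.
Set Implicit Arguments. Unset Strict Implicit.
Local Open Scope classical_set_scope.
Local Open Scope card_scope.

Lemma final_ineq (R : rcfType) (P k n : nat) : (P <= 2*k)%N -> (2^k <= n)%N ->
  (Num.sqrt (2%:R:R) ^+ P <= n%:R)%R.
Proof.
move=> hP hk.
have s1 : (1 <= Num.sqrt (2%:R:R))%R.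
  by rewrite -{1}(sqrtr1 R) ler_sqrt ?ler0n // ler1n.
apply: (le_trans (ler_weXn2l s1 hP)).
rewrite exprM sqr_sqrtr ?ler0n // -natrX ler_nat //.
Qed.

Definition i0 : 'I_5 := @Ordinal 5 0 isT.
Definition i1 : 'I_5 := @Ordinal 5 1 isT.
Definition i2 : 'I_5 := @Ordinal 5 2 isT.
Definition i3 : 'I_5 := @Ordinal 5 3 isT.
Definition i4 : 'I_5 := @Ordinal 5 4 isT.

Lemma ord5P (P : 'I_5 -> Prop) : P i0 -> P i1 -> P i2 -> P i3 -> P i4 -> forall i, P i.
Proof.
move=> h0 h1 h2 h3 h4 [[|[|[|[|[|m]]]]] H].
- by rewrite (_ : Ordinal H = i0) //; apply: val_inj.
- by rewrite (_ : Ordinal H = i1) //; apply: val_inj.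
- by rewrite (_ : Ordinal H = i2) //; apply: val_inj.
- by rewrite (_ : Ordinal H = i3) //; apply: val_inj.
- by rewrite (_ : Ordinal H = i4) //; apply: val_inj.
- by [].
Qed.

Lemma big5 (op : nat -> nat -> nat) (idx : nat) (x : pt 5) :
  \big[op/idx]_(i < 5) x i = op (x i0) (op (x i1) (op (x i2) (op (x i3) (op (x i4) idx)))).
Proof.
rewrite !big_ord_recl big_ord0.
by congr (op (x _) (op (x _) (op (x _) (op (x _) (op (x _) _))))); apply: val_inj.
Qed.

Lemma pext (x y : pt 5) : x i0 = y i0 -> x i1 = y i1 -> x i2 = y i2 -> x i3 = y i3 -> x i4 = y i4 -> x = y.
Proof. by move=> *; apply: funext; apply: ord5P. Qed.

Lemma ple_refl (x : pt 5) : ple x x. Proof. by move=> i. Qed.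
Lemma ple_trans (x y z : pt 5) : ple x y -> ple y z -> ple x z.
Proof. by move=> h1 h2 i; apply: leq_trans (h1 i) (h2 i). Qed.
Lemma ple_anti (x y : pt 5) : ple x y -> ple y x -> x = y.
Proof. by move=> h1 h2; apply: funext => i; apply/eqP; rewrite eqn_leq h1 h2. Qed.

Definition psum (x : pt 5) := (\sum_(i < 5) x i)%N.

Lemma psum_lt (x y : pt 5) : ple x y -> x <> y -> (psum x < psum y)%N.
Proof.
move=> h ne; rewrite /psum !big5.
have := h i0; have := h i1; have := h i2; have := h i3; have := h i4.
rewrite ltn_neqAle; case: eqP => [e|]; last by move=> ? *; lia.
move=> *; exfalso; apply: ne; apply: pext; lia.
Qed.


Lemma holes_le (F : pt 5) (S : set (pt 5)) : FrobeniusGNS F S ->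
  forall x, ~ S x -> ple x F.
Proof.
move=> [[_ fin] [_ uniq]].
have [X hX] := finite_fsetP.1 fin.
pose M := (\max_(y <- X) psum y)%N.
have bnd : forall y, ~ S y -> (psum y <= M)%N.
  move=> y hy; apply: leq_bigmax_seq => //.
  have : holes S y by [].
  by rewrite hX.
suff: forall k x, ~ S x -> (M - psum x <= k)%N -> ple x F.
  by move=> h x hx; apply: (h _ x hx (leqnn _)).
elim=> [|k IH] x hx hk.
- have := bnd x hx.
  case: (pselect (is_maximal (holes S) x)) => [mx _|nmx bx].
    by rewrite (uniq x mx); apply: ple_refl.
  exfalso; apply: nmx; split => // y hy hxy.
  apply: contrapT => ne.
  have := psum_lt hxy (fun e => ne (esym e)); have := bnd y hy; lia.
- case: (pselect (is_maximal (holes S) x)) => [mx|nmx].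
    by rewrite (uniq x mx); apply: ple_refl.
  have [y [hy hxy ne]] : exists y, [/\ ~ S y, ple x y & y <> x].
    apply: contrapT => hn; apply: nmx; split => // y hy hxy.
    apply: contrapT => ne; apply: hn; exists y; split => //.
  have lt := psum_lt hxy (fun e => ne (esym e)).
  have := bnd y hy => by1.
  apply: (ple_trans hxy); apply: (IH y hy); lia.
Qed.


Section Box.
Variable F : pt 5.
Let M := (\max_(i < 5) F i)%N.
Let Tb := {ffun 'I_5 -> 'I_M.+1}.
Definition emb (t : Tb) : pt 5 := fun i => val (t i).
Definition toB (x : pt 5) : Tb := [ffun i => inord (x i)].

Lemma emb_toB x : ple x F -> emb (toB x) = x.
Proof.
move=> h; apply: funext => i; rewrite /emb ffunE /= inordK //.
by rewrite ltnS; apply: leq_trans (h i) _; apply: leq_bigmax.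
Qed.

Definition Phi (H : {set Tb}) : set (pt 5) := [set x | forall t, t \in H -> x <> emb t].

Lemma FGNS_finite : finite_set [set S : set (pt 5) | FrobeniusGNS F S].
Proof.
apply: (sub_finite_set (B := Phi @` setT)); last by apply: finite_image.
move=> S hS; exists [set t : Tb | `[< ~ S (emb t) >]]%SET => //.
apply: funext => x; apply: propext; split.
- move=> hx; apply: contrapT => nS.
  have hle := holes_le hS nS.
  apply: (hx (toB x)); last by rewrite emb_toB.
  by rewrite inE; apply/asboolP; rewrite emb_toB.
- move=> Sx t; rewrite inE => /asboolP nS e.
  by apply: nS; rewrite -e.
Qed.
Lemma box_finite : finite_set [set x | ple x F].
Proof.
apply: (sub_finite_set (B := @emb @` (@setT Tb))); last by apply: finite_image; apply: finite_finset.
by move=> x hx; exists (toB x); [by [] | exact: emb_toB].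
Qed.
End Box.


Section Constr.
Variable F : pt 5.
Hypothesis F0 : F <> pzero.
Let c := (F i0 - F i0 %/ 2)%N.
Definition U : finType := ('I_c * 'I_(F i1).+1 * 'I_(F i2).+1 * 'I_(F i3).+1 * 'I_(F i4).+1)%type.
Definition e (u : U) : pt 5 := fun i =>
  match val i with
  | 0 => (F i0 %/ 2 + 1 + u.1.1.1.1)%N
  | 1 => val u.1.1.1.2 | 2 => val u.1.1.2 | 3 => val u.1.2 | _ => val u.2 end.

Lemma e_le u : ple (e u) F.
Proof.
case: u => [[[[a0 a1] a2] a3] a4].
apply: ord5P; rewrite /e /=.
- have := ltn_ord a0; rewrite /c; lia.
- by rewrite -ltnS.
- by rewrite -ltnS.
- by rewrite -ltnS.
- by rewrite -ltnS.
Qed.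

Lemma e0 u : (F i0 < 2 * e u i0)%N.
Proof. case: u => [[[[a0 a1] a2] a3] a4]; rewrite /e /=; lia. Qed.

Lemma e_inj : injective e.
Proof.
move=> [[[[a0 a1] a2] a3] a4] [[[[b0 b1] b2] b3] b4] h.
have h0 := congr1 (fun f => f i0) h; have h1 := congr1 (fun f => f i1) h.
have h2 := congr1 (fun f => f i2) h; have h3 := congr1 (fun f => f i3) h.
have h4 := congr1 (fun f => f i4) h.
rewrite /e /= in h0 h1 h2 h3 h4.
have -> : a0 = b0 by apply: val_inj; rewrite /=; lia.
by rewrite (val_inj h1) (val_inj h2) (val_inj h3) (val_inj h4).
Qed.

Definition isF u : bool := [forall i, e u i == F i].
Lemma isFP u : reflect (e u = F) (isF u).
Proof.
apply: (iffP forallP) => [h|->//]; apply: funext => i; exact/eqP.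
Qed.

Definition Lset : {set U} := [set u | ~~ isF u]%SET.

Definition SG (G : {set U}) : set (pt 5) :=
  [set x | ~ ple x F \/ x = pzero \/ exists2 u, u \in G & x = e u].

Lemma notle_add x y : ~ ple x F -> ~ ple (padd x y) F.
Proof. by move=> h hl; apply: h => i; apply: leq_trans (hl i); apply: leq_addr. Qed.

Lemma SG_FGNS (G : {set U}) : (G \subset Lset)%SET -> FrobeniusGNS F (SG G).
Proof.
move=> sub.
have hole_le : forall x, ~ SG G x -> ple x F.
  by move=> x hx; apply: contrapT => nl; apply: hx; left.
have Fhole : ~ SG G F.
  case=> [h|[h|[u uG eu]]]; first by apply: h; apply: ple_refl.
  - by apply: F0.
  - have := fintype.subsetP sub u uG; rewrite inE => /isFP; apply; by [].
split; [split; [split|]|split; [split|]].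
- by right; left.
- move=> x y [hx|[hx|[u uG ->]]] hy.
  + by left; apply: notle_add.
  + have -> : padd x y = y by apply: funext => i; rewrite /padd hx.
    exact: hy.
  + case: hy => [hy|[hy|[v vG ->]]].
    * left; rewrite (_ : padd (e u) y = padd y (e u)); first by apply: notle_add.
      by apply: funext => i; rewrite /padd addnC.
    * have -> : padd (e u) y = e u by apply: funext => i; rewrite /padd hy addn0.
      by right; right; exists u.
    * left => hl; have := hl i0; rewrite /padd.
      have := e0 u; have := e0 v; lia.
- apply: (sub_finite_set (B := [set x | ple x F])).
    by move=> x hx; apply: hole_le.
  exact: box_finite.
- exact: Fhole.
- move=> y hy hFy; apply: ple_anti => //; exact: hole_le.
- move=> h [hh hmax]; apply: esym; apply: hmax => //; exact: hole_le.
Qed.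
End Constr.


Section Count.
Variable F : pt 5.

Lemma card_U : #|U F| = ((F i0 - F i0 %/ 2) * (F i1).+1 * (F i2).+1 * (F i3).+1 * (F i4).+1)%N.
Proof. by rewrite !card_prod !card_ord. Qed.

Lemma card_L : (#|U F| <= #|Lset F| + 1)%N.
Proof.
rewrite -(cardsC (Lset F)) leq_add2l.
apply/card_le1_eqP => u v; rewrite !inE !negbK => /isFP hu /isFP hv.
by apply: (@e_inj F); rewrite hu hv.
Qed.

Lemma SG_sub (G1 G2 : {set U F}) : SG G1 = SG G2 -> (G1 \subset G2)%SET.
Proof.
move=> h; apply/fintype.subsetP => u uG1.
have : SG G2 (e u) by rewrite -h; right; right; exists u.
case=> [hl|[h0|[v vG2 ev]]].
- by exfalso; apply: hl; apply: e_le.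
- by exfalso; have := e0 u; rewrite h0 /pzero; lia.
- by rewrite (e_inj ev).
Qed.

Lemma SG_inj (G1 G2 : {set U F}) : SG G1 = SG G2 -> G1 = G2.
Proof. by move=> h; apply/eqP; rewrite finset.eqEsubset !SG_sub. Qed.

End Count.

Lemma arith (a b1 b2 b3 b4 k : nat) :
  ((a - a %/ 2) * b1.+1 * b2.+1 * b3.+1 * b4.+1 <= k + 1)%N ->
  (a * (b1 * (b2 * (b3 * (b4 * 1)))) <= 2 * k)%N.
Proof.
move=> h.
case: a h => [|a] h; first by rewrite mul0n.
set c := (a.+1 - a.+1 %/ 2)%N in h.
have hc1 : (1 <= c)%N by rewrite /c; lia.
have hc2 : (a.+1 <= 2 * c)%N by rewrite /c; lia.
set P := (b1 * (b2 * (b3 * (b4 * 1))))%N.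
have hQ : (P + 1 <= b1.+1 * b2.+1 * b3.+1 * b4.+1)%N.
  have st : forall x y y', (y + 1 <= y')%N -> (x * y + 1 <= x.+1 * y')%N.
    move=> x y y' hy; have := leq_mul (leqnn x.+1) hy; nia.
  rewrite /P muln1 -!mulnA.
  apply: (st); apply: (st); apply: (st); lia.
have h2 : (c * (P + 1) <= k + 1)%N.
  apply: leq_trans h; rewrite -!mulnA; apply: leq_mul => //.
  by rewrite !mulnA.
have : (a.+1 * P <= 2 * c * P)%N by apply: leq_mul.
nia.
Qed.

End Helpers.
Import Helpers.
Unset Implicit Arguments.

Local Open Scope ring_scope.

Theorem proposition5p3 (R : rcfType) (F : pt 5) :
  F <> pzero ->
  exists n : nat, N_is F n /\
    (Num.sqrt (2%:R : R)) ^+ (\prod_(i < 5) F i)%N <= n%:R.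
Proof.
move=> F0.
have [n hn] := (finite_setP _).1 (FGNS_finite F).
exists n; split => //.
set k := #|Lset F|.
set s := enum (powerset (Lset F)).
have sz : size s = (2 ^ k)%N by rewrite -cardE card_powerset.
pose f := fun i : nat => SG (nth finset.set0 s i).
have memG : forall i, (i < size s)%N -> (nth finset.set0 s i \subset Lset F)%SET.
  by move=> i hi; have := mem_nth finset.set0 hi; rewrite mem_enum powersetE.
have inj : {in `I_(2 ^ k) &, injective f}.
  move=> i j; rewrite !in_setE /= -sz => hi hj /SG_inj => h.
  by apply/eqP; rewrite -(nth_uniq finset.set0 hi hj (enum_uniq _)) h.
have le1 : (`I_(2 ^ k) #<= [set S : set (pt 5) | FrobeniusGNS F S])%card.
  rewrite -(card_le_eql (inj_card_eq inj)).
  apply: subset_card_le => S [i hi <-] /=.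
  apply: SG_FGNS => //; apply: memG; rewrite sz; exact: hi.
have : (2 ^ k <= n)%N by rewrite -card_le_II -(card_le_eqr hn).
apply: final_ineq.
rewrite big5; apply: arith.
by rewrite -card_U; apply: card_L.
Qed.
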